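(* Let $O$ be a principal open subset of $\mathfrak h$ and $\Sigma$ an irreducible hypersurface of $O+\mathfrak u$. Suppose that $\Sigma$ is invariant under the one-parameter subgroup $t\mapsto\rho(t)$ of $G$. Then either $O\subset\Sigma$ or $\Sigma=\Sigma\cap\mathfrak h+\mathfrak u$.
   Context: Let $k$ be algebraically closed of characteristic $0$, $\mathfrak g$ a finite-dimensional reductive Lie algebra over $k$ with adjoint group $G$, $\mathfrak b$ a Borel subalgebra, $\mathfrak h\subset\mathfrak b$ a Cartan subalgebra, $\mathfrak u$ the nilpotent radical of $\mathfrak b$, $\Pi$ the corresponding set of simple roots. Let $h$ be the element of $\mathfrak h\cap[\mathfrak g,\mathfrak g]$ with $\beta(h)=2$ for all $\beta\in\Pi$, and $t\mapsto\rho(t)$ ($t\in k^*$) the one-parameter subgroup of $G$ generated by ${\rm ad}\,h$, i.e. $\rho(t)$ acts trivially on $\mathfrak h$ and by $t^{\alpha(h)}$ on each root space $\mathfrak g^\alpha$. $O+\mathfrak u$ is the open subset $\{x+u:x\in O,u\in\mathfrak u\}$ of $\mathfrak h+\mathfrak u=\mathfrak b$. *)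

(* Defs.v *)
From HB Require Import structures.
From mathcomp Require Import all_boot all_order all_algebra.
From mathcomp Require Import mpoly.
Set Implicit Arguments. Unset Strict Implicit. Unset Printing Implicit Defensive.
Import Order.TTheory GRing.Theory.
Local Open Scope ring_scope.

(* The Borel subalgebra b = h (+) u, with h of dimension r and u of dimension
   m, in coordinates adapted to the decomposition
   b = h (+) (+)_{alpha > 0} g^alpha  (one coordinate per positive root).
   A point of b is a function 'I_(r+m) -> k; the first r coordinates are the
   h-part, the last m coordinates the u-part. *)
Definition pt (k : Type) (r m : nat) := 'I_(r + m) -> k.

Definition hpart (k : Type) (r m : nat) (v : pt k r m) : 'I_r -> k :=
  fun i => v (lshift m i).

Definition mkpt (k : Type) (r m : nat) (x : 'I_r -> k) (u : 'I_m -> k)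
  : pt k r m :=
  fun i => match split i with inl a => x a | inr b => u b end.

Definition hpt (k : nzRingType) (r m : nat) (x : 'I_r -> k) : pt k r m :=
  mkpt x (fun _ => 0).

(* rho(t): trivial on h, multiplication by t^(w j) on the j-th root
   coordinate of u, where w j = alpha_j(h) for the positive root alpha_j. *)
Definition rho (k : nzRingType) (r m : nat) (w : 'I_m -> nat) (t : k)
  (v : pt k r m) : pt k r m :=
  fun i => match split i with
           | inl _ => v i
           | inr j => t ^+ w j * v i end.

Definition principal_open (k : nzRingType) (r : nat) (f : {mpoly k[r]})
  : ('I_r -> k) -> Prop := fun x => f.@[x] <> 0.

Definition Oplusu (k : nzRingType) (r m : nat) (O : ('I_r -> k) -> Prop)
  : pt k r m -> Prop := fun v => O (hpart v).

(* Zariski topology induced on a subset U of b = k^(r+m):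
   Z is closed in U iff Z = U /\ V(S) for a set S of polynomial functions. *)
Definition closed_in (k : nzRingType) (r m : nat) (U Z : pt k r m -> Prop)
  : Prop :=
  exists S : {mpoly k[r + m]} -> Prop,
    forall v, Z v <-> (U v /\ forall p, S p -> p.@[v] = 0).

Definition irreducible_in (k : nzRingType) (r m : nat) (U Z : pt k r m -> Prop)
  : Prop :=
  closed_in U Z /\ (exists v, Z v) /\
  forall Z1 Z2, closed_in U Z1 -> closed_in U Z2 ->
    (forall v, Z v -> Z1 v \/ Z2 v) ->
    (forall v, Z v -> Z1 v) \/ (forall v, Z v -> Z2 v).

(* Irreducible hypersurface of U: an irreducible closed subset of U of
   codimension 1, i.e. a proper irreducible closed subset Sigma such that
   every chain Sigma = Z0 < Z1 < ... of irreducible closed subsets of U has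
   length at most 1 (no irreducible closed Z strictly between Sigma and U). *)
Definition irreducible_hypersurface (k : nzRingType) (r m : nat)
  (U Sigma : pt k r m -> Prop) : Prop :=
  irreducible_in U Sigma /\
  (exists v, U v /\ ~ Sigma v) /\
  forall Z, irreducible_in U Z -> (forall v, Sigma v -> Z v) ->
    (forall v, Z v <-> Sigma v) \/ (forall v, Z v <-> U v).

(* Main.v *)
Require Import Defs.
From HB Require Import structures.
From mathcomp Require Import all_boot all_order all_algebra.
From mathcomp Require Import mpoly.
From Stdlib Require Import FunctionalExtensionality Classical.
Import GRing.Theory.
Local Open Scope ring_scope.

Lemma mmap_horner (k : comNzRingType) n (P : 'I_n -> {poly k}) (p : {mpoly k[n]}) s :
  (mmap polyC P p).[s] = p.@[fun i => (P i).[s]].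
Proof.
rewrite /mmap mevalE horner_sum; apply: eq_bigr => mo _.
rewrite hornerCM /mmap1 horner_prod; congr (_ * _); apply: eq_bigr => i _.
by rewrite horner_exp.
Qed.

Lemma natf_inj (k : closedFieldType) (Hchar : [pchar k] =i pred0) (a b : nat) :
  (a%:R : k) = b%:R -> a = b.
Proof.
have hnat := (pcharf0P k).1 Hchar.
wlog le : a b / (a <= b)%N.
  move=> W E; case: (leqP a b) => h; first exact: W.
  by symmetry; apply: W; [exact: ltnW|].
move=> E; move/subnKC: le => Eb; rewrite -Eb natrD in E.
have : (b - a)%:R == 0 :> k by apply/eqP; apply: (addrI (a%:R : k)); rewrite addr0 -E.
rewrite hnat => /eqP h; by rewrite -Eb h addn0.
Qed.

Lemma poly_nz_roots (k : closedFieldType) (Hchar : [pchar k] =i pred0) (P : {poly k}) :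
  (forall t, t != 0 -> P.[t] = 0) -> P = 0.
Proof.
move=> H; apply/eqP; apply/negPn/negP => nz.
have hnat := (pcharf0P k).1 Hchar.
pose rs := [seq (i.+1)%:R : k | i <- iota 0 (size P)].
have H1 : all (root P) rs.
  apply/allP => x /mapP [i _ ->]; apply/eqP; apply: H; by rewrite hnat.
have H2 : uniq rs.
  rewrite map_inj_uniq ?iota_uniq // => i j /(@natf_inj k Hchar); by case.
have := max_poly_roots nz H1 H2; by rewrite size_map size_iota ltnn.
Qed.

Lemma hpart_mkpt {k r m} (x : 'I_r -> k) (u : 'I_m -> k) : hpart (mkpt x u) = x.
Proof.
apply: functional_extensionality => i; rewrite /hpart /mkpt.
by have := unsplitK (inl _ i : 'I_r + 'I_m) => /= ->.
Qed.

Definition upart k r m (v : pt k r m) : 'I_m -> k := fun j => v (rshift r j).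
Arguments upart {k r m}.

Lemma mkpt_parts {k r m} (v : pt k r m) : mkpt (hpart v) (upart v) = v.
Proof.
apply: functional_extensionality => i; rewrite /hpart /upart /mkpt.
case E: (split i) => [a|b]; have := splitK i; by rewrite E /= => ->.
Qed.

Lemma U_mkpt {k : nzRingType} {r m} (O : ('I_r -> k) -> Prop) x (u : 'I_m -> k) :
  Oplusu O (mkpt x u) <-> O x.
Proof. by rewrite /Oplusu hpart_mkpt. Qed.

Lemma stepA (k : closedFieldType) (r m : nat) (w : 'I_m -> nat)
  (Hchar : [pchar k] =i pred0) (Hw : forall j, (0 < w j)%N)
  (O : ('I_r -> k) -> Prop) (Sigma : pt k r m -> Prop) :
  closed_in (Oplusu O) Sigma ->
  (forall t : k, t != 0 -> forall v, Sigma v -> Sigma (rho w t v)) ->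
  forall v, Sigma v -> Sigma (hpt (hpart v)).
Proof.
move=> [S HS] Hinv v Sv.
have [Uv Sv0] := (HS v).1 Sv.
apply/(HS _).2; split; first by rewrite /hpt U_mkpt.
move=> p Sp.
pose P := fun i : 'I_(r+m) => match split i with
  | inl _ => (v i)%:P | inr j => 'X^(w j) * (v i)%:P end.
have E : forall t, (mmap polyC P p).[t] = p.@[rho w t v].
  move=> t; rewrite mmap_horner; apply: meval_eq => i; rewrite /P /rho.
  by case: (split i) => [a|j]; rewrite ?hornerC // hornerM hornerXn hornerC.
have Z : mmap polyC P p = 0.
  apply: (@poly_nz_roots k Hchar) => t nt; rewrite E.
  by case: ((HS _).1 (Hinv t nt v Sv)) => _; apply.
transitivity p.@[rho w 0 v]; last by rewrite -E Z horner0.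
apply: meval_eq => i; rewrite /hpt /mkpt /hpart /rho.
case E1: (split i) => [a|j].
  by have := splitK i; rewrite E1 /= => ->.
rewrite expr0n; have -> : (w j == 0)%N = false by rewrite eqn0Ngt Hw.
by rewrite mul0r.
Qed.

Lemma closed_sect (k : closedFieldType) (r m : nat) (O : ('I_r -> k) -> Prop)
  (Z : pt k r m -> Prop) (u : 'I_m -> k) :
  closed_in (Oplusu O) Z ->
  closed_in (Oplusu O) (fun v : pt k r m => Oplusu O v /\ Z (mkpt (hpart v) u)).
Proof.
move=> [S HS].
pose T := [tuple match split i with inl a => 'X_(lshift m a)
                 | inr b => (u b)%:MP end | i < r + m] : (r+m).-tuple {mpoly k[r+m]}.
have Hg : forall v : pt k r m, (fun i => (tnth T i).@[v]) =1 mkpt (hpart v) u.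
  move=> v i; rewrite tnth_mktuple /mkpt /hpart.
  by case: (split i) => [a|b]; rewrite ?mevalXU ?mevalC.
exists (fun q => exists2 p, S p & q = comp_mpoly T p) => v; split.
- move=> [Uv Zg]; split=> // q [p Sp ->].
  rewrite comp_mpoly_meval (meval_eq _ (Hg v)).
  by case: ((HS _).1 Zg) => _; apply.
- move=> [Uv H]; split=> //; apply/(HS _).2; split; first by rewrite U_mkpt.
  move=> p Sp; have := H _ (ex_intro2 _ _ p Sp erefl).
  by rewrite comp_mpoly_meval (meval_eq _ (Hg v)).
Qed.
Arguments stepA {k r m w} Hchar Hw {O Sigma}.
Arguments closed_sect {k r m O Z} u.

Lemma notZ (k : closedFieldType) (r m : nat) (O : ('I_r -> k) -> Prop)
  (Z : pt k r m -> Prop) x :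
  closed_in (Oplusu O) Z -> Oplusu O x -> ~ Z x ->
  exists S : {mpoly k[r + m]} -> Prop,
    (forall v, Z v <-> (Oplusu O v /\ forall p, S p -> p.@[v] = 0)) /\
    exists2 p, S p & p.@[x] <> 0.
Proof.
move=> [S HS] Ux nZ; exists S; split=> //.
apply: NNPP => H; apply: nZ; apply/(HS x).2; split=> // p Sp.
apply: NNPP => hp; apply: H; by exists p.
Qed.

Arguments notZ {k r m O Z x}.

Theorem lemma1p8 (k : closedFieldType) (r m : nat) (w : 'I_m -> nat)
  (Hchar : [pchar k] =i pred0)
  (Hw : forall j, (0 < w j)%N)
  (f : {mpoly k[r]}) (Sigma : pt k r m -> Prop) :
  let O := principal_open f in
  irreducible_hypersurface (Oplusu (m:=m) O) Sigma ->
  (forall t : k, t != 0 -> forall v, Sigma v -> Sigma (rho w t v)) ->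
  (forall x, O x -> Sigma (hpt x)) \/
  (forall v, Sigma v <-> (Sigma (hpt (hpart v)))).
Proof.
move=> O [[HcS [[v0 Sv0] Hirr]] [_ Hmax]] Hinv.
have A := stepA Hchar Hw HcS Hinv.
have SU : forall v, Sigma v -> Oplusu O v.
  by case: HcS => S HS v /(HS v).1 [].
pose Sig' := fun v : pt k r m => Oplusu O v /\ Sigma (mkpt (hpart v) (fun _ => 0)).
have cl' : closed_in (Oplusu O) Sig' := closed_sect (fun _ => 0) HcS.
have irr' : irreducible_in (Oplusu O) Sig'.
  split=> //; split; first by exists v0; split; [exact: SU | exact: A].
  move=> Z1 Z2 c1 c2 cov.
  have key : forall u, (forall v, Sigma v -> Z1 (mkpt (hpart v) u)) \/
                       (forall v, Sigma v -> Z2 (mkpt (hpart v) u)).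
    move=> u.
    case: (Hirr _ _ (closed_sect u c1) (closed_sect u c2)) => [v Sv|H|H].
    + idtac.
      have : Sig' (mkpt (hpart v) u).
        split; first by rewrite U_mkpt; exact: (SU v Sv).
        rewrite hpart_mkpt; exact: (A v Sv).
      by move/cov => [h|h]; [left|right]; split=> //; exact: SU.
    + by left=> v Sv; case: (H v Sv).
    + by right=> v Sv; case: (H v Sv).
  suff [H|H] : (forall u v, Sigma v -> Z1 (mkpt (hpart v) u)) \/
               (forall u v, Sigma v -> Z2 (mkpt (hpart v) u)).
    + left=> v [Uv Sp]; have := H (upart v) _ Sp; by rewrite hpart_mkpt mkpt_parts.
    + right=> v [Uv Sp]; have := H (upart v) _ Sp; by rewrite hpart_mkpt mkpt_parts.
  apply: NNPP => Hn; have [n1 n2] := not_or_and _ _ Hn.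
  have [u1 n1a] := not_all_ex_not _ _ n1.
  have [v1 n1b] := not_all_ex_not _ _ n1a.
  have [Sv1 nZ1] := imply_to_and _ _ n1b.
  have [u2 n2a] := not_all_ex_not _ _ n2.
  have [v2 n2b] := not_all_ex_not _ _ n2a.
  have [Sv2 nZ2] := imply_to_and _ _ n2b.
  have [S1 [HS1 [p1 Sp1 np1]]] := notZ c1 (proj2 (U_mkpt O (hpart v1) u1) (SU v1 Sv1)) nZ1.
  have [S2 [HS2 [p2 Sp2 np2]]] := notZ c2 (proj2 (U_mkpt O (hpart v2) u2) (SU v2 Sv2)) nZ2.
  pose L := fun s : k => fun b => u1 b + s * (u2 b - u1 b).
  pose G := fun (v : pt k r m) p => mmap polyC (fun i : 'I_(r+m) => match split i with
     | inl a => (v (lshift m a))%:P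
     | inr b => (u1 b)%:P + 'X * (u2 b - u1 b)%:P end) p.
  have GE : forall v p s, (G v p).[s] = p.@[mkpt (hpart v) (L s)].
    move=> v p s; rewrite mmap_horner; apply: meval_eq => i; rewrite /mkpt /hpart /L.
    by case: (split i) => [a|b]; rewrite ?hornerC // hornerD hornerM hornerX !hornerC.
  have G0 : G v1 p1 * G v2 p2 = 0.
    apply: (@poly_nz_roots k Hchar) => s _; rewrite hornerM !GE.
    case: (key (L s)) => h.
    + by have [_ ->] := (HS1 _).1 (h v1 Sv1); rewrite ?mul0r.
    + by have [_ ->] := (HS2 _).1 (h v2 Sv2); rewrite ?mulr0.
  have L0 : L 0 = u1 by apply: functional_extensionality => b; rewrite /L mul0r addr0.
  have L1 : L 1 = u2 by apply: functional_extensionality => b; rewrite /L mul1r addrC subrK.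
  move/eqP: G0; rewrite mulf_eq0 => /orP [] /eqP h.
  + by apply: np1; rewrite -L0 -GE h horner0.
  + by apply: np2; rewrite -L1 -GE h horner0.
have sub : forall v, Sigma v -> Sig' v := fun v Sv => conj (SU v Sv) (A v Sv).
case: (Hmax Sig' irr' sub) => H.
- right=> v; split; first exact: A.
  move=> Sp; apply/(H v).1; split=> //.
  by have := SU _ Sp; rewrite /hpt U_mkpt.
- left=> x Ox.
  have := (H (hpt x)).2; rewrite /hpt U_mkpt => /(_ Ox) [_].
  by rewrite hpart_mkpt.
Qed.
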